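(* Let $T$ be a rooted binary phylogenetic tree with root $\rho$ of out-degree 2 and children $\rho_1,\rho_2$, and let $\dot T_1,\dot T_2$ be as defined in the context. Under the $N_r$ model (any $r\ge2$), $$RA_\varphi(T)=\tfrac12\big(RA_\varphi(\dot T_1)+RA_\varphi(\dot T_2)\big).$$
   Context: A rooted binary phylogenetic tree is a finite tree with a distinguished root vertex $\rho$, all edges directed away from $\rho$, in which $\rho$ has out-degree 2 or 1 (in the latter case the edge at $\rho$ is the stem edge), and every other vertex has in-degree 1 and out-degree 0 or 2; out-degree-0 vertices are leaves. Under the Neyman $r$-state model $N_r$ ($r\ge2$) on a state set of size $r$, each edge $e$ carries a substitution probability $p_e\in[0,\frac{r-1}{r}]$; given the root state, states propagate independently along edges: for an edge $(u,v)$, $F(v)=F(u)$ with probability $1-p_e$, and otherwise $F(v)$ is uniform among the $r-1$ other states; $f$ is the restriction of $F$ to the leaves. The coin-toss method $\varphi$: leaves get their states $f(x)$; proceeding towards the root, a vertex whose two children have equal states gets that state, otherwise one of the two states chosen by an independent fair coin toss; a vertex with a single child gets its child's state. $RA_\varphi$ is the probability that the state assigned to the root equals the true root state. For $i=1,2$, $T_i$ is the maximal subtree of $T$ rooted at $\rho_i$, and $\dot T_i$ is the tree consisting of $T_i$ together with the edge $(\rho,\rho_i)$ (with its substitution probability from $T$) as stem edge, rooted at $\rho$. *)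

(* Defs.v *)
From HB Require Import structures.
From mathcomp Require Import all_boot all_order all_algebra.
Unset Printing Implicit Defensive.
Import Order.TTheory GRing.Theory Num.Theory.
Local Open Scope ring_scope.

(* Non-root part of a rooted binary phylogenetic tree: a vertex is either a
   leaf, or has two children; [Bin p1 t1 p2 t2] has child subtrees t1, t2
   reached by edges with substitution probabilities p1, p2. *)
Inductive tree (R : Type) : Type :=
| Leaf : tree R
| Bin : R -> tree R -> R -> tree R -> tree R.
Arguments Leaf {R}.
Arguments Bin {R}.

(* A rooted binary phylogenetic tree: the root has out-degree 2
   ([RBin p1 t1 p2 t2]) or out-degree 1 (stem edge with probability p). *)
Inductive rtree (R : Type) : Type :=
| RBin : R -> tree R -> R -> tree R -> rtree R
| RStem : R -> tree R -> rtree R.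
Arguments RBin {R}.
Arguments RStem {R}.

Fixpoint nleaves {R : Type} (t : tree R) : nat :=
  match t with
  | Leaf => 1
  | Bin _ t1 _ t2 => nleaves t1 + nleaves t2
  end%N.

Definition rnleaves {R : Type} (t : rtree R) : nat :=
  match t with
  | RBin _ t1 _ t2 => nleaves t1 + nleaves t2
  | RStem _ t => nleaves t
  end%N.

Definition okp {R : realFieldType} (r : nat) (p : R) : bool :=
  (0 <= p) && (p <= (r.-1)%:R / r%:R).

Fixpoint valid_tree {R : realFieldType} (r : nat) (t : tree R) : bool :=
  match t with
  | Leaf => true
  | Bin p1 t1 p2 t2 => [&& okp r p1, okp r p2, valid_tree r t1 & valid_tree r t2]
  end.

Definition valid_rtree {R : realFieldType} (r : nat) (t : rtree R) : bool :=
  match t with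
  | RBin p1 t1 p2 t2 => [&& okp r p1, okp r p2, valid_tree r t1 & valid_tree r t2]
  | RStem p t => okp r p && valid_tree r t
  end.

Definition Ntrans {R : realFieldType} {r : nat} (p : R) (a c : 'I_r) : R :=
  if a == c then 1 - p else p / (r.-1)%:R.

(* lik t a f = probability that the leaves of t (in left-to-right order)
   receive the states f, given that the root of t has state a. *)
Fixpoint lik {R : realFieldType} {r : nat} (t : tree R) (a : 'I_r)
    (f : seq 'I_r) : R :=
  match t with
  | Leaf => (f == [:: a])%:R
  | Bin p1 t1 p2 t2 =>
      \sum_(c1 : 'I_r) \sum_(c2 : 'I_r)
        Ntrans p1 a c1 * Ntrans p2 a c2 *
        lik t1 c1 (take (nleaves t1) f) * lik t2 c2 (drop (nleaves t1) f)
  end.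

Definition rlik {R : realFieldType} {r : nat} (t : rtree R) (a : 'I_r)
    (f : seq 'I_r) : R :=
  match t with
  | RBin p1 t1 p2 t2 =>
      \sum_(c1 : 'I_r) \sum_(c2 : 'I_r)
        Ntrans p1 a c1 * Ntrans p2 a c2 *
        lik t1 c1 (take (nleaves t1) f) * lik t2 c2 (drop (nleaves t1) f)
  | RStem p t => \sum_(c : 'I_r) Ntrans p a c * lik t c f
  end.

Definition coin {R : realFieldType} {r : nat} (b1 b2 b : 'I_r) : R :=
  if b1 == b2 then (b == b1)%:R
  else 2^-1 * ((b == b1)%:R + (b == b2)%:R).

(* ct t f b = probability that the coin-toss method, applied to t with leaf
   states f (left-to-right order), assigns state b to the root of t. *)
Fixpoint ct {R : realFieldType} {r : nat} (t : tree R) (f : seq 'I_r)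
    (b : 'I_r) : R :=
  match t with
  | Leaf => (f == [:: b])%:R
  | Bin _ t1 _ t2 =>
      \sum_(b1 : 'I_r) \sum_(b2 : 'I_r)
        ct t1 (take (nleaves t1) f) b1 * ct t2 (drop (nleaves t1) f) b2 *
        coin b1 b2 b
  end.

Definition rct {R : realFieldType} {r : nat} (t : rtree R) (f : seq 'I_r)
    (b : 'I_r) : R :=
  match t with
  | RBin _ t1 _ t2 =>
      \sum_(b1 : 'I_r) \sum_(b2 : 'I_r)
        ct t1 (take (nleaves t1) f) b1 * ct t2 (drop (nleaves t1) f) b2 *
        coin b1 b2 b
  | RStem _ t => ct t f b
  end.

Definition RA {R : realFieldType} {r : nat} (pi : 'I_r -> R) (t : rtree R) : R :=
  \sum_(a : 'I_r) pi a *
    \sum_(f : (rnleaves t).-tuple 'I_r) rlik t a f * rct t f a.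

(* Main.v *)
Require Import Defs.
From HB Require Import structures.
From mathcomp Require Import all_boot all_order all_algebra ring.
Import Order.TTheory GRing.Theory Num.Theory.
Local Open Scope ring_scope.

Section S.
Variables (R : realFieldType) (T : finType).

Lemma tk_P n1 n2 (f : (n1+n2).-tuple T) : size (take n1 f) == n1.
Proof. by rewrite size_take size_tuple; apply/eqP; apply/minn_idPl; rewrite leq_addr. Qed.
Lemma dr_P n1 n2 (f : (n1+n2).-tuple T) : size (drop n1 f) == n2.
Proof. by rewrite size_drop size_tuple addKn. Qed.

Lemma split_sum n1 n2 (F : seq T -> seq T -> R) :
  \sum_(f : (n1+n2).-tuple T) F (take n1 f) (drop n1 f) =
  \sum_(g : n1.-tuple T) \sum_(h : n2.-tuple T) F g h.
Proof.
rewrite pair_big /=.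
rewrite (reindex (fun p : n1.-tuple T * n2.-tuple T => cat_tuple p.1 p.2)) /=.
  apply: eq_bigr => -[g h] _ /=.
  by rewrite take_size_cat ?size_tuple // drop_size_cat ?size_tuple.
exists (fun f : (n1+n2).-tuple T => (Tuple (@tk_P n1 n2 f), Tuple (@dr_P n1 n2 f))) => [[g h] _|f _].
  by congr pair; apply: val_inj => /=;
     [rewrite take_size_cat ?size_tuple | rewrite drop_size_cat ?size_tuple].
by apply: val_inj => /=; rewrite cat_take_drop.
Qed.
End S.
Section S2.
Variables (R : realFieldType) (r : nat) (hr : (2 <= r)%N).

Lemma Ntrans_sum (p : R) (a : 'I_r) : \sum_(c : 'I_r) Ntrans p a c = 1.
Proof.
rewrite (bigD1 a) //= /Ntrans eqxx.
rewrite (eq_bigr (fun _ => p / (r.-1)%:R)); last by move=> c /negbTE; rewrite eq_sym => ->.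
rewrite sumr_const.
have -> : #|[pred i : 'I_r | i != a]| = r.-1 by rewrite cardC1 card_ord.
rewrite -[_ *+ _]mulr_natr mulfVK; first by rewrite subrK.
by rewrite pnatr_eq0 -lt0n -ltnS prednK // ltnW.
Qed.

Lemma half2 (x : R) : 2^-1 * (x *+ 2) = x.
Proof. by rewrite -[x *+ 2]mulr_natl mulrA mulVf ?mul1r // pnatr_eq0. Qed.

Lemma coinE (b1 b2 b : 'I_r) :
  coin b1 b2 b = 2^-1 * ((b == b1)%:R + (b == b2)%:R) :> R.
Proof.
rewrite /coin; case: eqP => // ->.
by rewrite -mulr2n half2.
Qed.

Lemma ind_sum (b0 : 'I_r) : \sum_(b : 'I_r) (b == b0)%:R = 1 :> R.
Proof. by rewrite (bigD1 b0) //= eqxx big1 ?addr0 // => b /negbTE ->. Qed.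

Lemma coin_sum (b1 b2 : 'I_r) : \sum_(b : 'I_r) coin b1 b2 b = 1 :> R.
Proof.
under eq_bigr do rewrite coinE.
rewrite -mulr_sumr big_split /= !ind_sum.
by rewrite -mulr2n half2.
Qed.

Lemma ct_sum (t : tree R) (f : seq 'I_r) : size f = nleaves t ->
  \sum_(b : 'I_r) ct t f b = 1.
Proof.
elim: t f => [|p1 t1 IH1 p2 t2 IH2] f /= hf.
  case: f hf => [|x [|]] //= _.
  rewrite (eq_bigr (fun b => (b == x)%:R)) ?ind_sum // => b _.
  by rewrite eqseq_cons andbT eq_sym.
rewrite exchange_big /=.
rewrite (eq_bigr (fun b1 => \sum_(b2 : 'I_r) ct t1 (take (nleaves t1) f) b1 *
    ct t2 (drop (nleaves t1) f) b2)).
  rewrite -(IH1 (take (nleaves t1) f)); last by rewrite size_take hf; apply/minn_idPl; rewrite leq_addr.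
  apply: eq_bigr => b1 _; rewrite -mulr_sumr IH2 ?mulr1 //.
  by rewrite size_drop hf addKn.
move=> b1 _; rewrite exchange_big /=; apply: eq_bigr => b2 _.
by rewrite -mulr_sumr coin_sum mulr1.
Qed.

Lemma prod_split (A1 A2 : 'I_r -> R) (B1 B2 : 'I_r -> R) :
  \sum_(c1 : 'I_r) \sum_(c2 : 'I_r) A1 c1 * A2 c2 * B1 c1 * B2 c2 =
  (\sum_(c1 : 'I_r) A1 c1 * B1 c1) * (\sum_(c2 : 'I_r) A2 c2 * B2 c2).
Proof.
rewrite big_distrlr /=; apply: eq_bigr => c1 _; apply: eq_bigr => c2 _.
by rewrite -!mulrA; congr (_ * _); rewrite mulrCA.
Qed.

Lemma lik_sum (t : tree R) (c : 'I_r) :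
  \sum_(g : (nleaves t).-tuple 'I_r) lik t c g = 1.
Proof.
elim: t c => [|p1 t1 IH1 p2 t2 IH2] c /=.
  rewrite (bigD1 [tuple c]) //= eqxx big1 ?addr0 // => g hg.
  case: eqP => // hg'; case/eqP: hg; exact: val_inj.
rewrite (@split_sum R 'I_r _ _ (fun g h => \sum_(c1 : 'I_r) \sum_(c2 : 'I_r)
        Ntrans p1 c c1 * Ntrans p2 c c2 * lik t1 c1 g * lik t2 c2 h)).
under eq_bigr do under eq_bigr do rewrite prod_split.
rewrite -big_distrlr /=.
rewrite [X in X * _]exchange_big [X in _ * X]exchange_big /=.
rewrite -[RHS]mulr1 -{1}(Ntrans_sum p1 c) -(Ntrans_sum p2 c).
congr (_ * _); apply: eq_bigr => c1 _.
  by rewrite -mulr_sumr IH1 mulr1.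
by rewrite -mulr_sumr IH2 mulr1.
Qed.
Lemma sum_ind_mul (F : 'I_r -> R) (a : 'I_r) :
  \sum_(b : 'I_r) F b * (a == b)%:R = F a.
Proof.
rewrite (bigD1 a) //= eqxx mulr1 big1 ?addr0 // => b hb.
by rewrite eq_sym (negbTE hb) mulr0.
Qed.

Lemma ct_coin (t1 t2 : tree R) (g h : seq 'I_r) (a : 'I_r) :
  size g = nleaves t1 -> size h = nleaves t2 ->
  \sum_(b1 : 'I_r) \sum_(b2 : 'I_r) ct t1 g b1 * ct t2 h b2 * coin b1 b2 a =
  2^-1 * (ct t1 g a + ct t2 h a).
Proof.
move=> hg hh.
transitivity (2^-1 * (\sum_(b1 : 'I_r) \sum_(b2 : 'I_r)
   ((ct t1 g b1 * (a == b1)%:R) * ct t2 h b2 + ct t1 g b1 * (ct t2 h b2 * (a == b2)%:R)))).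
  rewrite mulr_sumr; apply: eq_bigr => b1 _; rewrite mulr_sumr; apply: eq_bigr => b2 _.
  by rewrite coinE; ring.
under eq_bigr do rewrite big_split /=.
rewrite big_split /= -!big_distrlr /= !sum_ind_mul (ct_sum _ _ hg) (ct_sum _ _ hh).
by rewrite mulr1 mul1r.
Qed.
End S2.

Lemma sum2_split (R : realFieldType) (I J : finType) (F G : I -> J -> R) :
  \sum_(i : I) \sum_(j : J) (F i j + G i j) =
  \sum_(i : I) \sum_(j : J) F i j + \sum_(i : I) \sum_(j : J) G i j.
Proof. by rewrite -big_split; apply: eq_bigr => i _; rewrite big_split. Qed.

Theorem theorem3 (R : realFieldType) (r : nat) (hr : (2 <= r)%N)
  (pi : 'I_r -> R) (hpi0 : forall a, 0 <= pi a) (hpi1 : \sum_(a : 'I_r) pi a = 1)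
  (p1 p2 : R) (T1 T2 : tree R)
  (hvalid : valid_rtree r (RBin p1 T1 p2 T2)) :
  RA pi (RBin p1 T1 p2 T2) =
    2^-1 * (RA pi (RStem p1 T1) + RA pi (RStem p2 T2)).
Proof.
rewrite /RA -big_split [RHS]mulr_sumr; apply: eq_bigr => a _.
rewrite /= -mulrDr mulrCA; congr (_ * _) => /=.
rewrite (@split_sum R 'I_r _ _ (fun g h => (\sum_(c1 : 'I_r) \sum_(c2 : 'I_r)
        Ntrans p1 a c1 * Ntrans p2 a c2 * lik T1 c1 g * lik T2 c2 h) *
     (\sum_(b1 : 'I_r) \sum_(b2 : 'I_r) ct T1 g b1 * ct T2 h b2 * coin b1 b2 a))).
transitivity (2^-1 * \sum_(g : (nleaves T1).-tuple 'I_r) \sum_(h : (nleaves T2).-tuple 'I_r)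
  (((\sum_(c1 : 'I_r) Ntrans p1 a c1 * lik T1 c1 g) * ct T1 g a) *
          (\sum_(c2 : 'I_r) Ntrans p2 a c2 * lik T2 c2 h) +
          (\sum_(c1 : 'I_r) Ntrans p1 a c1 * lik T1 c1 g) *
          ((\sum_(c2 : 'I_r) Ntrans p2 a c2 * lik T2 c2 h) * ct T2 h a))).
  rewrite mulr_sumr; apply: eq_bigr => g _; rewrite mulr_sumr; apply: eq_bigr => h _.
  rewrite prod_split (ct_coin _ _ _ _ _ _ _ (size_tuple g) (size_tuple h)); ring.
congr (_ * _).
rewrite sum2_split -!big_distrlr /=.
have S1 : \sum_(g : (nleaves T1).-tuple 'I_r) \sum_(c1 : 'I_r) Ntrans p1 a c1 * lik T1 c1 g = 1.
  rewrite exchange_big /= -(Ntrans_sum _ _ hr p1 a); apply: eq_bigr => c _.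
  by rewrite -mulr_sumr lik_sum // mulr1.
have S2 : \sum_(h : (nleaves T2).-tuple 'I_r) \sum_(c2 : 'I_r) Ntrans p2 a c2 * lik T2 c2 h = 1.
  rewrite exchange_big /= -(Ntrans_sum _ _ hr p2 a); apply: eq_bigr => c _.
  by rewrite -mulr_sumr lik_sum // mulr1.
by rewrite S1 S2 mulr1 mul1r.
Qed.
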